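(* Let $\vec X\in\underline V^h$ with $|\vec X_\rho|>0$ a.e. on $I$, and let $\kappa\in V^h$ be such that $$\big(\kappa\,\vec\nu,\vec\eta\,|\vec X_\rho|\big)^h+\big(\vec X_\rho,\vec\eta_\rho|\vec X_\rho|^{-1}\big)=-\sum_{i=1}^2\sum_{p\in\partial_iI}\widehat\varrho^{(p)}\,\vec\eta(p)\cdot\vec e_{3-i}\qquad\forall\,\vec\eta\in\underline V^h_\partial .$$ Let $\vec h_j=\vec X(q_j)-\vec X(q_{j-1})$ for $j=1,\dots,J$, and $\vec h_0=\vec h_J$ if $\partial I=\emptyset$. Then $|\vec h_j|=|\vec h_{j-1}|$ whenever $\vec h_j$ and $\vec h_{j-1}$ are not parallel, for $j=1,\dots,J$ if $\partial I=\emptyset$ and for $j=2,\dots,J$ if $\partial I\neq\emptyset$.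
   Context: Setup. $\vec e_1=(1,0)^T$, $\vec e_2=(0,1)^T$; ''$\cdot$'' is the Euclidean inner product. $I$ is either the periodic interval $\mathbb R/\mathbb Z$ (with $\partial I=\emptyset$) or $I=(0,1)$ (with $\partial I=\{0,1\}$). $\partial I=\partial_DI\cup\partial_0I\cup\partial_1I\cup\partial_2I$ is a given disjoint partition, and $\widehat\varrho^{(p)}\in\mathbb R$, $p\in\{0,1\}$, are given constants. Let $J\ge3$, $h=1/J$, $q_j=jh$ ($j=0,\dots,J$; $q_0=q_J$ identified in the periodic case). $V^h$ is the space of continuous functions on $\overline I$ (periodic if $I=\mathbb R/\mathbb Z$) that are affine on each $[q_{j-1},q_j]$; $\underline V^h=[V^h]^2$; $\underline V^h_\partial=\{\vec\eta\in\underline V^h:\vec\eta(\rho)\cdot\vec e_1=0\ \forall\rho\in\partial_0I;\ \vec\eta(\rho)\cdot\vec e_i=0\ \forall\rho\in\partial_iI,\ i=1,2;\ \vec\eta(\rho)=\vec0\ \forall\rho\in\partial_DI\}$. $(\cdot,\cdot)$ is the $L^2(I)$ inner product, and for piecewise continuous $f,g$ the mass-lumped product is $(f,g)^h=\tfrac h2\sum_{j=1}^J[(fg)(q_j^-)+(fg)(q_{j-1}^+)]$. $\vec\nu=-[\vec X_\rho]^\perp/|\vec X_\rho|$ (piecewise constant), where $(a,b)^\perp=(b,-a)$. *)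

(* Defs.v *)
From Stdlib Require Import Reals.
Open Scope R_scope.

Definition vec := (R * R)%type.
Definition vadd (a b : vec) : vec := (fst a + fst b, snd a + snd b).
Definition vsub (a b : vec) : vec := (fst a - fst b, snd a - snd b).
Definition vscale (c : R) (a : vec) : vec := (c * fst a, c * snd a).
Definition dot (a b : vec) : R := fst a * fst b + snd a * snd b.
Definition vnorm (a : vec) : R := sqrt (dot a a).
Definition perp (a : vec) : vec := (snd a, - fst a).
Definition e1 : vec := (1, 0).
Definition e2 : vec := (0, 1).

Definition parallel (a b : vec) : Prop :=
  exists s t : R, (s <> 0 \/ t <> 0) /\ vadd (vscale s a) (vscale t b) = (0, 0).

(** Boundary partition: each endpoint of (0,1) lies in exactly one of
    d_D I, d_0 I, d_1 I, d_2 I. *)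
Inductive bctype := BD | B0 | B1 | B2.

(** The domain I: periodic R/Z (empty boundary) or (0,1) with the kind of
    boundary condition at rho = 0 and at rho = 1. *)
Inductive domain := Periodic | Open (c0 c1 : bctype).

(** Mesh size h = 1/J; nodes q_j = j h, j = 0..J. *)
Definition meshsize (J : nat) : R := / INR J.

Fixpoint sum1 (n : nat) (f : nat -> R) : R :=
  match n with O => 0 | S m => sum1 m f + f (S m) end.

(** Elements of V^h (resp. [V^h]^2) are identified with their nodal values
    f(q_0), ..., f(q_J) (a continuous piecewise affine function is uniquely
    determined by them, and any nodal values define one); in the periodic case
    q_0 = q_J are identified, i.e. f J = f 0. *)
Definition in_Vh {A : Type} (d : domain) (J : nat) (f : nat -> A) : Prop :=
  match d with Periodic => f J = f O | Open _ _ => True end.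

Definition bc_ok (c : bctype) (v : vec) : Prop :=
  match c with
  | BD => v = (0, 0)
  | B0 => dot v e1 = 0
  | B1 => dot v e1 = 0
  | B2 => dot v e2 = 0
  end.

Definition in_Vh_partial (d : domain) (J : nat) (eta : nat -> vec) : Prop :=
  in_Vh d J eta /\
  match d with
  | Periodic => True
  | Open c0 c1 => bc_ok c0 (eta O) /\ bc_ok c1 (eta J)
  end.

(** The derivative w.r.t. rho of a piecewise affine vector function on the
    element [q_{j-1}, q_j] (j >= 1): (f(q_j) - f(q_{j-1}))/h. *)
Definition drho (J : nat) (f : nat -> vec) (j : nat) : vec :=
  vscale (/ meshsize J) (vsub (f j) (f (j - 1)%nat)).

Definition nu (J : nat) (X : nat -> vec) (j : nat) : vec :=
  vscale (- / vnorm (drho J X j)) (perp (drho J X j)).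

(** Mass-lumped product (f,g)^h = h/2 sum_{j=1}^J [(fg)(q_j^-) + (fg)(q_{j-1}^+)],
    given the one-sided values L j = (fg)(q_j^-) and Rt j = (fg)(q_{j-1}^+). *)
Definition mass_lumped (J : nat) (L Rt : nat -> R) : R :=
  meshsize J / 2 * sum1 J (fun j => L j + Rt j).

(** L^2(I) integral of a function that is constant (= F j) on each element
    [q_{j-1}, q_j]. *)
Definition l2_pc (J : nat) (F : nat -> R) : R :=
  sum1 J (fun j => meshsize J * F j).

Definition lumped_term (J : nat) (X : nat -> vec) (kappa : nat -> R)
    (eta : nat -> vec) : R :=
  mass_lumped J
    (fun j => kappa j * dot (nu J X j) (eta j) * vnorm (drho J X j))
    (fun j => kappa (j - 1)%nat * dot (nu J X j) (eta (j - 1)%nat)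
                * vnorm (drho J X j)).

Definition stiff_term (J : nat) (X : nat -> vec) (eta : nat -> vec) : R :=
  l2_pc J (fun j => dot (drho J X j) (vscale (/ vnorm (drho J X j)) (drho J eta j))).

(** Contribution of an endpoint p to  sum_{i=1}^2 sum_{p in d_i I} rho^(p) eta(p).e_{3-i} *)
Definition bterm (c : bctype) (r : R) (v : vec) : R :=
  match c with
  | B1 => r * dot v e2
  | B2 => r * dot v e1
  | _ => 0
  end.

Definition bsum (d : domain) (J : nat) (rho0 rho1 : R) (eta : nat -> vec) : R :=
  match d with
  | Periodic => 0
  | Open c0 c1 => bterm c0 rho0 (eta O) + bterm c1 rho1 (eta J)
  end.

(** h_j = X(q_j) - X(q_{j-1}) for j >= 1; h_0 := h_J (only used when the
    boundary is empty). *)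
Definition hvec (J : nat) (X : nat -> vec) (j : nat) : vec :=
  match j with
  | O => vsub (X J) (X (J - 1)%nat)
  | S k => vsub (X (S k)) (X k)
  end.

(** First index j for which the conclusion is claimed. *)
Definition jstart (d : domain) : nat :=
  match d with Periodic => 1%nat | Open _ _ => 2%nat end.

(* Main.v *)
Require Import Defs.
From Stdlib Require Import Reals Lra Lia Psatz.
Open Scope R_scope.

Lemma sum1_zero n f : (forall j, (1<=j<=n)%nat -> f j = 0) -> sum1 n f = 0.
Proof. induction n; simpl; intros H; [reflexivity|].
 rewrite IHn by (intros; apply H; lia). rewrite H by lia. ring. Qed.

Lemma sum1_one n f a : (1<=a<=n)%nat -> (forall j, (1<=j<=n)%nat -> j<>a -> f j = 0) -> sum1 n f = f a.
Proof. induction n; simpl; intros Ha H; [lia|].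
 destruct (Nat.eq_dec a (S n)) as [->|Hne].
 - rewrite sum1_zero by (intros; apply H; lia). ring.
 - rewrite IHn by (try lia; intros; apply H; lia). rewrite (H (S n)) by lia. ring. Qed.

Lemma sum1_two n f a b : (1<=a<=n)%nat -> (1<=b<=n)%nat -> a<>b ->
  (forall j, (1<=j<=n)%nat -> j<>a -> j<>b -> f j = 0) -> sum1 n f = f a + f b.
Proof. induction n; simpl; intros Ha Hb Hab H; [lia|].
 destruct (Nat.eq_dec a (S n)) as [->|Hna].
 - rewrite (sum1_one n f b) by (try lia; intros; apply H; lia). ring.
 - destruct (Nat.eq_dec b (S n)) as [->|Hnb].
   + rewrite (sum1_one n f a) by (try lia; intros; apply H; lia). ring.
   + rewrite IHn by (try lia; intros; apply H; lia). rewrite (H (S n)) by lia. ring. Qed.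

Definition cross (a b : vec) := fst a * snd b - snd a * fst b.

Lemma core (ra rb : vec) : vnorm ra > 0 -> vnorm rb > 0 -> cross ra rb <> 0 ->
  dot ra (vadd ra rb) / vnorm ra - dot rb (vadd ra rb) / vnorm rb = 0 -> vnorm ra = vnorm rb.
Proof.
 destruct ra as [x1 y1], rb as [x2 y2]. unfold vnorm, cross, dot, vadd; cbn [fst snd].
 assert (HA2: sqrt (x1*x1+y1*y1) * sqrt (x1*x1+y1*y1) = x1*x1+y1*y1) by (apply sqrt_sqrt; nra).
 assert (HB2: sqrt (x2*x2+y2*y2) * sqrt (x2*x2+y2*y2) = x2*x2+y2*y2) by (apply sqrt_sqrt; nra).
 revert HA2 HB2.
 generalize (sqrt (x1*x1+y1*y1)) as A. generalize (sqrt (x2*x2+y2*y2)) as B.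
 intros B A HA2 HB2 HA HB Hc E.
 set (p := x1 * (x1 + x2) + y1 * (y1 + y2)) in *.
 set (q := x2 * (x1 + x2) + y2 * (y1 + y2)) in *.
 assert (E2 : p*B - q*A = 0).
 { assert (A<>0) by lra. assert (B<>0) by lra. replace (p*B - q*A) with ((p / A - q / B)*(A*B)) by (field; auto). rewrite E; ring. }
 assert (E3 : (A - B) * (A*B - (x1*x2+y1*y2)) = 0).
 { unfold p, q in E2. nra. }
 assert (Hsq : (A*B)*(A*B) - (x1*x2+y1*y2)*(x1*x2+y1*y2) = (x1*y2-y1*x2)*(x1*y2-y1*x2)).
 { replace ((A*B)*(A*B)) with ((A*A)*(B*B)) by ring. rewrite HA2, HB2. ring. }
 assert (Hpos : (x1*y2-y1*x2)*(x1*y2-y1*x2) > 0) by (generalize (Rsqr_pos_lt _ Hc); unfold Rsqr; lra).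
 assert (A*B - (x1*x2+y1*y2) > 0) by nra.
 apply Rmult_integral in E3. destruct E3; nra.
Qed.

Lemma dot_0r v : dot v (0,0) = 0.
Proof. unfold dot; cbn [fst snd]; ring. Qed.

Lemma drho_zero J eta j : eta j = (0,0) -> eta (j-1)%nat = (0,0) -> drho J eta j = (0,0).
Proof. intros F1 F2. unfold drho, vscale, vsub. rewrite F1, F2; cbn [fst snd]. f_equal; ring. Qed.

Lemma dot_scale0 c v : dot v (vscale c (0,0)) = 0.
Proof. unfold dot, vscale; cbn [fst snd]; ring. Qed.

Lemma key J X kappa eta a b :
  (1<=a<=J)%nat -> (1<=b<=J)%nat -> a<>b ->
  vnorm (drho J X a) > 0 -> vnorm (drho J X b) > 0 ->
  eta a = vadd (drho J X a) (drho J X b) -> eta (a-1)%nat = (0,0) -> eta b = (0,0) ->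
  eta (b-1)%nat = vadd (drho J X a) (drho J X b) ->
  (forall j, (1<=j<=J)%nat -> j<>a -> j<>b -> eta j = (0,0) /\ eta (j-1)%nat = (0,0)) ->
  kappa a = kappa (b-1)%nat ->
  meshsize J > 0 ->
  lumped_term J X kappa eta + stiff_term J X eta = 0 ->
  dot (drho J X a) (vadd (drho J X a) (drho J X b)) / vnorm (drho J X a)
  - dot (drho J X b) (vadd (drho J X a) (drho J X b)) / vnorm (drho J X b) = 0.
Proof.
 intros Ha Hb Hab HA HB E1 E2 E3 E4 Hoth Hk Hh H.
 unfold lumped_term, stiff_term, mass_lumped, l2_pc in H.
 rewrite (sum1_two J _ a b) in H; try assumption;
  [ | intros j Hj Hja Hjb; destruct (Hoth j Hj Hja Hjb) as [F1 F2];
      rewrite F1, F2, !dot_0r; ring ].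
 rewrite (sum1_two J _ a b) in H; try assumption;
  [ | intros j Hj Hja Hjb; destruct (Hoth j Hj Hja Hjb) as [F1 F2];
      rewrite (drho_zero J eta j F1 F2), dot_scale0; ring ].
 assert (Da : drho J eta a = vscale (/meshsize J) (vsub (eta a) (eta (a-1)%nat))) by reflexivity.
 assert (Db : drho J eta b = vscale (/meshsize J) (vsub (eta b) (eta (b-1)%nat))) by reflexivity.
 rewrite Da, Db, E1, E2, E3, E4, Hk in H.
 unfold nu in H.
 revert H HA HB.
 generalize (drho J X a) as ra. generalize (drho J X b) as rb.
 revert Hh. generalize (meshsize J) as h.
 intros h Hh rb ra H HA HB. revert H HA HB.
 destruct ra as [x1 y1], rb as [x2 y2].
 generalize (vnorm (x1,y1)) as A. generalize (vnorm (x2,y2)) as B.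
 unfold dot, vscale, vsub, vadd, perp; cbn [fst snd].
 intros B A H HA HB. rewrite <- H. field. lra.
Qed.

Lemma vnorm_scale c v : c > 0 -> vnorm (vscale c v) = c * vnorm v.
Proof. intros Hc. destruct v as [x y]. unfold vnorm, dot, vscale; cbn [fst snd].
 replace (c*x*(c*x)+c*y*(c*y)) with ((c*c)*(x*x+y*y)) by ring.
 rewrite sqrt_mult_alt by nra. rewrite sqrt_square by lra. reflexivity. Qed.

Lemma drho_hvec J X i : (1<=i)%nat -> drho J X i = vscale (/meshsize J) (hvec J X i).
Proof. intros Hi. destruct i as [|k]; [lia|]. unfold drho, hvec.
 replace (S k - 1)%nat with k by lia. reflexivity. Qed.

Lemma hvec0 J X : (1<=J)%nat -> hvec J X 0 = hvec J X J.
Proof. intros HJ. destruct J as [|m]; [lia|]. unfold hvec.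
 replace (S m - 1)%nat with m by lia. reflexivity. Qed.

Lemma nonpar u v : ~ parallel u v -> cross u v <> 0.
Proof. intros Hn Hc. apply Hn. destruct u as [a1 a2], v as [b1 b2].
 unfold cross in Hc; cbn [fst snd] in Hc. unfold parallel, vadd, vscale; cbn [fst snd].
 destruct (Req_dec a1 0) as [H1|H1].
 - destruct (Req_dec a2 0) as [H2|H2].
   + exists 1, 0. split; [left; lra|]. subst. f_equal; ring.
   + exists b2, (-a2). split; [right; lra|]. f_equal; nra.
 - exists b1, (-a1). split; [right; lra|]. f_equal; nra.
Qed.

Lemma finish (ha hb : vec) c :
  c > 0 -> ~ parallel hb ha -> vnorm (vscale c ha) > 0 -> vnorm (vscale c hb) > 0 ->
  dot (vscale c ha) (vadd (vscale c ha) (vscale c hb)) / vnorm (vscale c ha)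
  - dot (vscale c hb) (vadd (vscale c ha) (vscale c hb)) / vnorm (vscale c hb) = 0 ->
  vnorm hb = vnorm ha.
Proof.
 intros Hc Hp HA HB E.
 assert (Hx : cross (vscale c ha) (vscale c hb) <> 0).
 { apply nonpar in Hp. destruct ha as [a1 a2], hb as [b1 b2].
   unfold cross, vscale in *; cbn [fst snd] in *. intro Z. apply Hp.
   assert (c*c*(a1*b2 - a2*b1) = 0) by lra.
   apply Rmult_integral in H. destruct H as [H|H]; [nra|lra]. }
 pose proof (core _ _ HA HB Hx E) as C.
 rewrite !vnorm_scale in C by lra.
 apply Rmult_eq_reg_l in C; lra.
Qed.

Lemma bc_zero c : bc_ok c (0,0).
Proof. destruct c; simpl; try reflexivity; unfold dot; simpl; ring. Qed.

Lemma bterm_zero c r : bterm c r (0,0) = 0.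
Proof. destruct c; unfold bterm, dot; cbn [fst snd]; ring. Qed.

Theorem mainTheorem8 (d : domain) (rho0 rho1 : R) (J : nat) (HJ : (3 <= J)%nat)
  (X : nat -> vec) (kappa : nat -> R)
  (HX : in_Vh d J X) (Hk : in_Vh d J kappa)
  (Hpos : forall j : nat, (1 <= j <= J)%nat -> vnorm (drho J X j) > 0)
  (Heq : forall eta : nat -> vec, in_Vh_partial d J eta ->
     lumped_term J X kappa eta + stiff_term J X eta = - bsum d J rho0 rho1 eta) :
  forall j : nat, (jstart d <= j <= J)%nat ->
    ~ parallel (hvec J X j) (hvec J X (j - 1)%nat) ->
    vnorm (hvec J X j) = vnorm (hvec J X (j - 1)%nat).
Proof.
  intros j Hj Hnp.
  assert (Hh : meshsize J > 0).
  { unfold meshsize. apply Rinv_0_lt_compat. apply lt_0_INR. lia. }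
  assert (Hc : / meshsize J > 0) by (apply Rinv_0_lt_compat; lra).
  assert (Hj1 : (1 <= j)%nat) by (destruct d; simpl in Hj; lia).
  destruct (Nat.eq_dec j 1) as [Ej|Nj].
  -
    assert (Hd : d = Periodic) by (destruct d; simpl in Hj; [reflexivity|lia]).
    subst j d. simpl in Hk.
    set (w := vadd (drho J X J) (drho J X 1)).
    set (eta := fun n => if (Nat.eqb n 0 || Nat.eqb n J)%bool then w else (0,0)).
    assert (Hin : in_Vh_partial Periodic J eta).
    { split; [|exact I]. unfold in_Vh, eta. rewrite Nat.eqb_refl.
      simpl. rewrite Bool.orb_true_r. reflexivity. }
    pose proof (Heq eta Hin) as H. simpl bsum in H. rewrite Ropp_0 in H.
    assert (K := key J X kappa eta J 1 ltac:(lia) ltac:(lia) ltac:(lia)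
      (Hpos J ltac:(lia)) (Hpos 1%nat ltac:(lia))).
    specialize (K ltac:(unfold eta; rewrite Nat.eqb_refl, Bool.orb_true_r; reflexivity)).
    specialize (K ltac:(unfold eta; replace (J-1 =? 0)%nat with false by (symmetry; apply Nat.eqb_neq; lia);
       replace (J-1 =? J)%nat with false by (symmetry; apply Nat.eqb_neq; lia); reflexivity)).
    specialize (K ltac:(unfold eta; replace (1 =? J)%nat with false by (symmetry; apply Nat.eqb_neq; lia); reflexivity)).
    specialize (K ltac:(reflexivity)).
    specialize (K ltac:(intros i Hi Hia Hib; unfold eta;
       replace (i =? 0)%nat with false by (symmetry; apply Nat.eqb_neq; lia);
       replace (i =? J)%nat with false by (symmetry; apply Nat.eqb_neq; lia);
       replace (i - 1 =? 0)%nat with false by (symmetry; apply Nat.eqb_neq; lia);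
       replace (i - 1 =? J)%nat with false by (symmetry; apply Nat.eqb_neq; lia); split; reflexivity)).
    specialize (K ltac:(simpl; exact Hk) Hh H).
    rewrite (drho_hvec J X J), (drho_hvec J X 1) in K by lia.
    rewrite <- hvec0 in K by lia.
    simpl (1-1)%nat.
    apply (finish _ _ _ Hc Hnp); [ | | exact K].
    + rewrite hvec0 by lia. rewrite <- drho_hvec by lia. apply Hpos; lia.
    + rewrite <- drho_hvec by lia. apply Hpos; lia.
  - assert (Hj2 : (2 <= j)%nat) by lia.
    set (w := vadd (drho J X (j-1)) (drho J X j)).
    set (eta := fun n => if Nat.eqb n (j-1) then w else (0,0)).
    assert (Z0 : eta 0%nat = (0,0)).
    { unfold eta. replace (0 =? j-1)%nat with false by (symmetry; apply Nat.eqb_neq; lia). reflexivity. }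
    assert (ZJ : eta J = (0,0)).
    { unfold eta. replace (J =? j-1)%nat with false by (symmetry; apply Nat.eqb_neq; lia). reflexivity. }
    assert (Hin : in_Vh_partial d J eta).
    { destruct d; split; simpl.
      - rewrite Z0, ZJ. reflexivity.
      - exact I.
      - exact I.
      - rewrite Z0, ZJ. split; apply bc_zero. }
    pose proof (Heq eta Hin) as H.
    assert (Hb0 : bsum d J rho0 rho1 eta = 0).
    { destruct d; simpl; [reflexivity|]. rewrite Z0, ZJ, !bterm_zero. ring. }
    rewrite Hb0, Ropp_0 in H.
    assert (K := key J X kappa eta (j-1) j ltac:(lia) ltac:(lia) ltac:(lia)
      (Hpos (j-1)%nat ltac:(lia)) (Hpos j ltac:(lia))).
    specialize (K ltac:(unfold eta; rewrite Nat.eqb_refl; reflexivity)).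
    specialize (K ltac:(unfold eta; replace (j-1-1 =? j-1)%nat with false by (symmetry; apply Nat.eqb_neq; lia); reflexivity)).
    specialize (K ltac:(unfold eta; replace (j =? j-1)%nat with false by (symmetry; apply Nat.eqb_neq; lia); reflexivity)).
    specialize (K ltac:(unfold eta; rewrite Nat.eqb_refl; reflexivity)).
    specialize (K ltac:(intros i Hi Hia Hib; unfold eta;
       replace (i =? j-1)%nat with false by (symmetry; apply Nat.eqb_neq; lia);
       replace (i - 1 =? j-1)%nat with false by (symmetry; apply Nat.eqb_neq; lia); split; reflexivity)).
    specialize (K ltac:(reflexivity) Hh H).
    rewrite (drho_hvec J X (j-1)), (drho_hvec J X j) in K by lia.
    apply (finish _ _ _ Hc Hnp); [ | | exact K].
    + rewrite <- drho_hvec by lia. apply Hpos; lia.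
    + rewrite <- drho_hvec by lia. apply Hpos; lia.
Qed.
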